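(* Let $G$ be a finite group whose order is divisible by at least three distinct primes. If $x,y\in\Sigma(G)$, then $d(x,y)\leq 2$, where $d$ is the distance in $\Gamma(G)$.
   Context: For a finite group $G$, let $\widetilde{\Gamma}(G)$ be the graph with vertex set $G$ in which two distinct elements $x,y$ are adjacent if and only if $|\langle x,y\rangle|$ is divisible by at least three distinct primes; $\Gamma(G)$ is the subgraph obtained by deleting the isolated vertices, and $d(x,y)$ denotes the distance between vertices $x,y$ of $\Gamma(G)$. $\Sigma(G)$ denotes the set of elements $g\in G$ whose order is divisible by at least two distinct primes. *)

(* Defs.v *)
From mathcomp Require Import all_boot all_fingroup.
Set Implicit Arguments. Unset Strict Implicit. Unset Printing Implicit Defensive.
Local Open Scope group_scope.

Definition gadj (gT : finGroupType) (G : {group gT}) (x y : gT) : Prop :=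
  [/\ x \in G, y \in G, x != y & 3 <= size (primes #|<<[set x; y]>>|)].

(* Vertices of \Gamma(G): non-isolated vertices of \tilde\Gamma(G). *)
Definition gvertex (gT : finGroupType) (G : {group gT}) (x : gT) : Prop :=
  exists z, gadj G x z.

Definition Sigma (gT : finGroupType) (G : {group gT}) : {set gT} :=
  [set g in G | 2 <= size (primes #[g])].

Definition dist_le2 (gT : finGroupType) (G : {group gT}) (x y : gT) : Prop :=
  gvertex G x /\ gvertex G y /\
  (x = y \/ gadj G x y \/ exists z, gadj G x z /\ gadj G z y).

(* Main.v *)
Require Import Defs.
From mathcomp Require Import all_boot all_fingroup all_solvable.
Set Implicit Arguments. Unset Strict Implicit. Unset Printing Implicit Defensive.
Local Open Scope group_scope.

Lemma primes_sub (a b : nat) : a %| b -> 0 < b -> {subset primes a <= primes b}.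
Proof.
move=> ab b0 p; rewrite !mem_primes => /and3P[pp a0 pa].
by rewrite pp b0 (dvdn_trans pa ab).
Qed.

Lemma ord_dvd_join (gT : finGroupType) (w z : gT) :
  #[w] %| #|<<[set w; z]>>|.
Proof. by apply: cardSg; rewrite cycle_subG mem_gen // set21. Qed.

Lemma gadj_sym (gT : finGroupType) (G : {group gT}) x y : gadj G x y -> gadj G y x.
Proof. by case=> xG yG nxy h; split=> //; [rewrite eq_sym | rewrite setUC]. Qed.

Lemma key3 (gT : finGroupType) (G : {group gT}) w z :
  w \in G -> z \in G -> w != z -> 3 <= size (primes #[w]) -> gadj G w z.
Proof.
move=> wG zG wz h; split=> //; apply: leq_trans h _.
apply: uniq_leq_size (primes_uniq _) _.
by apply: primes_sub (ord_dvd_join _ _) (cardG_gt0 _).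
Qed.

Lemma key2 (gT : finGroupType) (G : {group gT}) w z r :
  w \in G -> z \in G -> w != z -> 2 <= size (primes #[w]) ->
  prime r -> r %| #[z] -> r \notin primes #[w] -> gadj G w z.
Proof.
move=> wG zG wz h pr rz rw; split=> //.
apply: (@leq_trans (size (r :: primes #[w]))); first by rewrite /= ltnS.
apply: uniq_leq_size; first by rewrite /= rw primes_uniq.
move=> p; rewrite inE => /orP[/eqP->|].
  rewrite mem_primes pr cardG_gt0 /=; apply: dvdn_trans rz _.
  by apply: cardSg; rewrite cycle_subG mem_gen // set22.
by apply: primes_sub (ord_dvd_join w z) (cardG_gt0 _) p.
Qed.

Lemma other_prime (gT : finGroupType) (G : {group gT}) (w : gT) :
  3 <= size (primes #|G|) -> size (primes #[w]) < 3 ->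
  exists2 r, r \in primes #|G| & r \notin primes #[w].
Proof.
move=> hG hw.
case: (boolP (has (predC (mem (primes #[w]))) (primes #|G|))).
  by case/hasP=> r r1 r2; exists r.
move/hasPn=> H.
have : size (primes #|G|) <= size (primes #[w]).
  apply: uniq_leq_size (primes_uniq _) _ => p /H /=; by rewrite negbK.
by move=> h; have := leq_trans hG (leq_trans h (hw : _ <= 2)).
Qed.

Lemma sigma_vertex (gT : finGroupType) (G : {group gT}) (w : gT) :
  3 <= size (primes #|G|) -> w \in Sigma G -> gvertex G w.
Proof.
move=> hG; rewrite inE => /andP[wG hw].
have w1 : w != 1.
  by apply/eqP=> w1; move: hw; rewrite w1 order1.
case: (leqP 3 (size (primes #[w]))) => h3.
  by exists 1; apply: key3 => //; rewrite group1.
have [r rG rw] := other_prime hG h3.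
have pr : prime r by move: rG; rewrite mem_primes => /andP[].
have rdG : r %| #|G| by move: rG; rewrite mem_primes => /and3P[].
have [z zG oz] := Cauchy pr rdG.
have wz : w != z.
  apply/eqP=> ewz; move: hw; rewrite ewz oz.
  by rewrite (primes_prime pr).
exists z; apply: (key2 wG zG wz _ pr _ rw) => //; first by rewrite oz.
Qed.

Theorem lemma2p6 (gT : finGroupType) (G : {group gT}) :
  3 <= size (primes #|G|) ->
  forall x y : gT, x \in Sigma G -> y \in Sigma G -> dist_le2 G x y.
Proof.
move=> hG x y xS yS.
split; first exact: sigma_vertex.
split; first exact: sigma_vertex.
have [-> | xy] := eqVneq x y; first by left.
right.
move: (xS) (yS); rewrite !inE => /andP[xG hx] /andP[yG hy].
case: (leqP 3 (size (primes #[x]))) => h3.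
  by left; apply: key3.
have [r rG rx] := other_prime hG h3.
have pr : prime r by move: rG; rewrite mem_primes => /andP[].
have rdG : r %| #|G| by move: rG; rewrite mem_primes => /and3P[].
case: (boolP (r \in primes #[y])) => ry.
  left; apply: (key2 (r := r)) => //.
  by move: ry; rewrite mem_primes => /and3P[].
have [z zG oz] := Cauchy pr rdG.
have nz w : 2 <= size (primes #[w]) -> w != z.
  apply: contraTneq => ->; rewrite oz.
  by rewrite (primes_prime pr).
right; exists z; split.
  by apply: (key2 (r := r)) => //; [exact: nz | rewrite oz].
by apply: gadj_sym; apply: (key2 (r := r)) => //; [exact: nz | rewrite oz].
Qed.
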